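(* Let $\beta>1$, fix $\epsilon>0$ with $p_c-2\epsilon>0$, and let $n$ be such that $\log_2 n$, $k=n(p_c-2\epsilon)$ and $n(p_c-\epsilon)$ are integers. Set $w=l-\log_2 n$. Consider the following random code. Draw $\mathbf{G}$ uniformly from $\mathbb{F}_{2^w}^{k\times n}$. Let $\mathbf{U}_1,\dots,\mathbf{U}_N$, with $N=2^{kw}$, be the elements of $\mathbb{F}_{2^w}^k$, and for each $i$ set $\mathbf{V}_i=\mathbf{G}^{\mathrm T}\mathbf{U}_i$. Form $\mathbf{X}_i\in\mathbb{F}_2^{n\times l}$ by taking, for each $r\in[n]$, its $r$-th row to be the binary expansion of $(\mathbf{V}_i)_r$ followed by the address $\alpha(r)$. Decode $\mathbf{Z}$ as follows. If there is a unique $i\in[N]$ with $|\mathbf{X}_i\cap\mathbf{Z}|\ge n(p_c-\epsilon)$, output $\widehat{\mathbf{U}}=\mathbf{U}_i$; otherwise declare failure. Then, when $\mathbf{X}_1$ is transmitted over the outer channel, the error probability, averaged over $\mathbf{G}$ and the channel, satisfies $$\mathbb{P}(\widehat{\mathbf{U}}\ne\mathbf{U}_1)\le e^{-2n\epsilon^2}+2^{\,n-n\epsilon w}=e^{-2n\epsilon^2}+2^{\,n-n\epsilon(\beta-1)\log_2 n},$$ which tends to $0$ as $n\to\infty$.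
   Context: The outer channel takes as input a binary matrix $\mathbf{X}\in\mathbb{F}_2^{n\times l}$ with rows $\mathbf{x}_1,\dots,\mathbf{x}_n$ and acts in two stages. Channel-1 acts independently on each row and outputs $\mathbf{y}_i$, where - $\mathbf{y}_i=\mathbf{x}_i$ with probability $p_c$; - $\mathbf{y}_i=?$ (an erased row) with probability $p_e$; - $\mathbf{y}_i=\mathbf{e}$ with probability $p_s/(2^l-1)$ for each $\mathbf{e}\in\mathbb{F}_2^l\setminus\{\mathbf{x}_i\}$. Here $p_c+p_e+p_s=1$. Channel-2 takes the $n$-row matrix $\mathbf{Y}$ (erased rows kept as ''?'') and outputs $\mathbf{Z}$, a uniformly random permutation of its rows (each of the $n!$ permutations has probability $1/n!$). We set $\beta=l/\log_2 n$. The map $\alpha:[n]\to\mathbb{F}_2^{\log_2 n}$ is a fixed bijection (the address map). $\mathbf{X}\cap\mathbf{Z}$ denotes the intersection of the sets of non-erased row vectors of $\mathbf{X}$ and of $\mathbf{Z}$. *)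

(* Defs.v *)
From HB Require Import structures.
From mathcomp Require Import all_boot all_order all_algebra all_fingroup.
From mathcomp Require Import reals sequences exp.
Set Implicit Arguments. Unset Strict Implicit. Unset Printing Implicit Defensive.
Import Order.TTheory GRing.Theory Num.Theory.
Local Open Scope ring_scope.

(* Row type: binary rows of length l = w + m, represented as (w+m).-tuple bool.
   A channel output row is [option row]: None is the erased row "?". *)

Definition codeword (F : finFieldType) (k n w m : nat)
  (bin : F -> w.-tuple bool) (alpha : 'I_n -> m.-tuple bool)
  (G : 'M[F]_(k, n)) (U : 'cV[F]_k) : 'I_n -> (w + m).-tuple bool :=
  fun r => cat_tuple (bin ((G^T *m U) r ord0)) (alpha r).

Definition codeword_set (F : finFieldType) (k n w m : nat)
  (bin : F -> w.-tuple bool) (alpha : 'I_n -> m.-tuple bool)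
  (G : 'M[F]_(k, n)) (U : 'cV[F]_k) : {set (w + m).-tuple bool} :=
  [set codeword bin alpha G U r | r in 'I_n].

Definition nonerased (n l : nat) (Z : {ffun 'I_n -> option (l.-tuple bool)})
  : {set l.-tuple bool} := [set y | [exists r, Z r == Some y]].

Definition row_prob (R : realType) (l : nat) (pc pe ps : R)
  (x : l.-tuple bool) (y : option (l.-tuple bool)) : R :=
  match y with
  | None => pe
  | Some e => if e == x then pc else ps / (2 ^+ l - 1)
  end.

Definition channel1_prob (R : realType) (n l : nat) (pc pe ps : R)
  (X : 'I_n -> l.-tuple bool) (Y : {ffun 'I_n -> option (l.-tuple bool)}) : R :=
  \prod_(r < n) row_prob pc pe ps (X r) (Y r).

Definition permute_rows (n l : nat) (Y : {ffun 'I_n -> option (l.-tuple bool)})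
  (s : 'S_n) : {ffun 'I_n -> option (l.-tuple bool)} := [ffun r => Y (s r)].

Definition decoder (F : finFieldType) (k n w m : nat)
  (bin : F -> w.-tuple bool) (alpha : 'I_n -> m.-tuple bool) (t : nat)
  (G : 'M[F]_(k, n)) (Z : {ffun 'I_n -> option ((w + m).-tuple bool)})
  : option 'cV[F]_k :=
  let good U' := (t <= #|codeword_set bin alpha G U' :&: nonerased Z|)%N in
  match [pick U' | good U'] with
  | Some U' => if [forall U'', good U'' ==> (U'' == U')] then Some U' else None
  | None => None
  end.

Definition error_prob (R : realType) (F : finFieldType) (k n w m : nat)
  (pc pe ps : R) (t : nat)
  (bin : F -> w.-tuple bool) (alpha : 'I_n -> m.-tuple bool) (U : 'cV[F]_k) : R :=
  \sum_(G : 'M[F]_(k, n)) (#|{: 'M[F]_(k, n)}|%:R)^-1 *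
    \sum_(Y : {ffun 'I_n -> option ((w + m).-tuple bool)})
      channel1_prob pc pe ps (codeword bin alpha G U) Y *
      \sum_(s : 'S_n) (n`!%:R)^-1 *
        ((decoder bin alpha t G (permute_rows Y s) != Some U) : nat)%:R.

(* Main.v *)
Require Import Defs.
From HB Require Import structures.
From mathcomp Require Import all_boot all_order all_algebra all_fingroup.
From mathcomp Require Import reals sequences exp.
From mathcomp Require Import boolp classical_sets topology normedtype derive realfun.
From mathcomp Require Import ring lra.
Import Order.TTheory GRing.Theory Num.Theory numFieldNormedType.Exports.
Local Open Scope ring_scope.

Lemma sum_option (R : nmodType) (T : finType) (f : option T -> R) :
  \sum_y f y = f None + \sum_x f (Some x).
Proof.
rewrite (bigD1 None) //=; congr (_ + _).
rewrite (reindex_omap Some id) /=; last by case.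
by apply: eq_bigl => x; rewrite eqxx.
Qed.

Section H.
Variable R : realType.
Variable p : R.
Hypothesis p01 : 0 <= p <= 1.
Definition DD (x : R) := p * expR x + (1 - p).
Lemma DD_gt0 x : 0 <= x -> 0 < DD x.
Proof.
move=> x0; rewrite /DD; case/andP: p01 => p0 p1.
have : 1 <= expR x by rewrite -expR0 ler_expR.
nra.
Qed.
Lemma dD (x : R) : is_derive x 1 DD (p * expR x).
Proof. rewrite /DD; apply: is_derive_eq; by rewrite addr0. Qed.
Lemma dV (x : R) : 0 <= x -> is_derive x 1 (fun y => (DD y)^-1) (- (DD x) ^- 2 * (p * expR x)).
Proof. move=> x0; apply: is_deriveV; [rewrite gt_eqF // DD_gt0 // | exact: dD]. Qed.
Definition psi (x : R) := p + x / 4 - p * expR x * (DD x)^-1.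
Lemma dpsi (x : R) : 0 <= x -> is_derive x 1 psi (4^-1 - p * expR x / DD x + (p * expR x / DD x)^+2).
Proof.
move=> x0; rewrite /psi.
have dv := @dV x x0.
apply: is_derive_eq.
have hD : DD x != 0 by rewrite gt_eqF // DD_gt0.
rewrite scaler0 add0r mul1r /GRing.scale /=. field. exact: hD. Qed.

Lemma mono_from_derive (f df : R -> R) :
  (forall x : R, 0 <= x -> is_derive x 1 f (df x)) ->
  (forall x : R, 0 <= x -> 0 <= df x) -> forall y : R, 0 <= y -> f 0 <= f y.
Proof.
move=> Hd Hp y y0.
apply: (@ger0_derive1_ndecr R f 0 y) => //.
- move=> x; rewrite in_itv /= => /andP[x0 _].
  by have [] := Hd x (ltW x0).
- move=> x; rewrite in_itv /= => /andP[x0 _].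
  rewrite derive1E (@derive_val _ _ _ _ _ _ _ (Hd x (ltW x0))).
  exact: Hp (ltW x0).
- apply: derivable_within_continuous => x; rewrite in_itv /= => /andP[x0 _].
  by have [] := Hd x x0.
Qed.

Lemma DD0 : DD 0 = 1.
Proof. by rewrite /DD expR0 mulr1 addrC subrK. Qed.

Lemma psi_ge0 (x : R) : 0 <= x -> 0 <= psi x.
Proof.
move=> x0.
have -> : 0 = psi 0 by rewrite /psi DD0 expR0 invr1 !mulr1 mul0r addr0 subrr.
apply: (@mono_from_derive psi (fun y => 4^-1 - p * expR y / DD y + (p * expR y / DD y)^+2)) => //; first exact: dpsi.
move=> y y0.
set u := p * expR y / DD y.
have -> : 4^-1 - u + u ^+ 2 = (u - 2^-1) ^+ 2 by field.
exact: sqr_ge0.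
Qed.

Definition gg (y : R) := p * y + y ^+ 2 / 8 - ((@ln R) \o DD) y.

Lemma dgg (x : R) : 0 <= x -> is_derive x 1 gg (psi x).
Proof.
move=> x0; rewrite /gg.
have dl := is_derive1_comp (is_derive1_ln (@DD_gt0 x x0)) (dD x).
apply: is_derive_eq.
rewrite /psi /GRing.scale /=. field. by rewrite gt_eqF // DD_gt0.
Qed.

Lemma hoeff_pos (x : R) : 0 <= x -> DD x <= expR (p * x + x ^+ 2 / 8).
Proof.
move=> x0.
have := @mono_from_derive gg psi dgg psi_ge0 x x0.
rewrite /gg /= DD0 ln1 mulr0 expr0n /= mul0r addr0 subr0 subr_ge0 => h.
rewrite -[DD x]lnK; last by rewrite posrE DD_gt0.
by rewrite ler_expR.
Qed.
End H.

Lemma hoeff (R : realType) (p lam : R) : 0 <= p <= 1 -> 0 <= lam ->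
  1 - p + p * expR (- lam) <= expR (- (p * lam) + lam ^+ 2 / 8).
Proof.
move=> /andP[p0 p1] l0.
have q01 : 0 <= 1 - p <= 1 by apply/andP; split; lra.
have := @hoeff_pos R (1 - p) q01 lam l0; rewrite /DD => H.
have e0 : 0 < expR (- lam) by apply: expR_gt0.
have -> : expR (- (p * lam) + lam ^+ 2 / 8) = expR ((1 - p) * lam + lam ^+ 2 / 8) * expR (- lam).
  by rewrite -expRD; congr expR; ring.
have -> : 1 - p + p * expR (- lam) = ((1 - p) * expR lam + (1 - (1 - p))) * expR (- lam).
  rewrite mulrDl -mulrA -expRD addrN expR0 mulr1; ring.
by rewrite ler_pM2r.
Qed.


Section Main.
Variables (R : realType) (F : finFieldType) (m w n k t : nat) (pc pe ps : R).
Variables (bin : F -> w.-tuple bool) (alpha : 'I_n -> m.-tuple bool).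
Hypothesis binI : injective bin.
Hypothesis alphaI : injective alpha.
Hypothesis w0 : (0 < w)%N.
Hypothesis pc0 : 0 <= pc.
Hypothesis pe0 : 0 <= pe.
Hypothesis ps0 : 0 <= ps.
Hypothesis psum : pc + pe + ps = 1.
Hypothesis hF : #|F| = (2 ^ w)%N.
Hypothesis hn : n = (2 ^ m)%N.

Local Notation T := ((w + m).-tuple bool).
Implicit Types (G : 'M[F]_(k, n)) (U V : 'cV[F]_k).
Local Notation DL := ((2:R) ^+ (w + m) - 1).

Lemma two_gt1 : (1 < 2 ^ (w + m))%N.
Proof. by rewrite -{1}(expn0 2) ltn_exp2l // addn_gt0 w0. Qed.

Lemma DL_gt0 : 0 < DL.
Proof. by rewrite -natrX subr_gt0 ltr1n two_gt1. Qed.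

Lemma cardT_R : (#|{: T}|%:R : R) = 2 ^+ (w + m).
Proof. by rewrite card_tuple card_bool natrX. Qed.

Lemma rowc (x : T) : ps / DL * \sum_(e : T | e != x) 1 = ps.
Proof.
rewrite sumr_const cardC1 card_tuple card_bool -natrX.
have h : (0 < 2 ^ (w + m))%N by rewrite expn_gt0.
have E : ((2 ^ (w + m)).-1%:R : R) = (2 ^ (w + m))%:R - 1.
  by rewrite -subn1 natrB.
rewrite E divfK //.
by have := DL_gt0; rewrite -natrX => H; rewrite gt_eqF.
Qed.

Lemma row_sum (x : T) (g : option T -> R) :
  \sum_y row_prob pc pe ps x y * g y =
  pe * g None + pc * g (Some x) + ps / DL * \sum_(e : T | e != x) g (Some e).
Proof.
rewrite sum_option /= -addrA; congr (_ + _).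
rewrite (bigD1 x) //= eqxx; congr (_ + _).
rewrite mulr_sumr; apply: eq_bigr => e /negbTE ->; by [].
Qed.

Lemma row_total (x : T) : \sum_y row_prob pc pe ps x y = 1.
Proof.
have := row_sum x (fun _ => 1); rewrite !mulr1.
under eq_bigr do rewrite mulr1.
by move=> ->; rewrite rowc -psum; ring.
Qed.

Lemma row_prob_ge0 (x : T) y : 0 <= row_prob pc pe ps x y.
Proof.
case: y => [e|] //=; case: (e == x) => //.
by apply: divr_ge0 => //; apply: ltW; apply: DL_gt0.
Qed.

Lemma chan_ge0 (X : 'I_n -> T) Y : 0 <= channel1_prob pc pe ps X Y.
Proof. by apply: prodr_ge0 => i _; apply: row_prob_ge0. Qed.

Lemma chan_prod (X : 'I_n -> T) (g : 'I_n -> option T -> R) :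
  \sum_(Y : {ffun 'I_n -> option T}) channel1_prob pc pe ps X Y * \prod_j g j (Y j)
  = \prod_j \sum_y row_prob pc pe ps (X j) y * g j y.
Proof.
rewrite bigA_distr_bigA /=; apply: eq_bigr => Y _.
by rewrite /channel1_prob -big_split.
Qed.

Lemma cat_tupleP (a c : w.-tuple bool) (b d : m.-tuple bool) :
  (cat_tuple a b == cat_tuple c d) = (a == c) && (b == d).
Proof.
by rewrite -val_eqE /= eqseq_cat ?size_tuple.

Qed.

Lemma codeword_eq G (U V : 'cV[F]_k) r r' :
  (codeword bin alpha G U r == codeword bin alpha G V r') =
  ((G^T *m U) r 0 == (G^T *m V) r' 0) && (r == r').
Proof.
rewrite /codeword cat_tupleP; congr (_ && _).
  by apply/eqP/eqP => [/binI|E]; last rewrite E.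
by apply/eqP/eqP => [/alphaI|E]; last rewrite E.
Qed.

Lemma codeword_inj G U : injective (codeword bin alpha G U).
Proof. by move=> r r' /eqP; rewrite codeword_eq => /andP[_ /eqP]. Qed.

Lemma card_codeword_set G U : #|codeword_set bin alpha G U| = n.
Proof. by rewrite card_imset ?card_ord //; apply: codeword_inj. Qed.

Lemma mem_codeword_set G U V j :
  (codeword bin alpha G U j \in codeword_set bin alpha G V) =
  ((G^T *m U) j 0 == (G^T *m V) j 0).
Proof.
apply/imsetP/idP => [[r _ /eqP]|/eqP E].
  by rewrite codeword_eq => /andP[/eqP E /eqP jr]; rewrite E jr.
by exists j => //; apply/eqP; rewrite codeword_eq E !eqxx.
Qed.

Lemma nonerased_perm l (Y : {ffun 'I_n -> option (l.-tuple bool)}) (s : 'S_n) :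
  nonerased (permute_rows Y s) = nonerased Y.
Proof.
apply/setP => y; rewrite !inE; apply/existsP/existsP => [[r]|[r]].
  by rewrite ffunE => H; exists (s r).
by move=> H; exists (s^-1 r)%g; rewrite ffunE permKV.
Qed.

Definition good t0 G (V : 'cV[F]_k) (Z : {ffun 'I_n -> option T}) :=
  (t0 <= #|codeword_set bin alpha G V :&: nonerased Z|)%N.

Lemma decoder_ok G U Z :
  good t G U Z -> (forall V, V != U -> ~~ good t G V Z) ->
  decoder bin alpha t G Z = Some U.
Proof.
move=> gU nV; rewrite /decoder.
case: pickP => [U' gU'|/(_ U)]; last by rewrite /good in gU *; rewrite gU.
have eU' : U' = U.
  by apply/eqP; apply: contraT => /nV; rewrite /good gU'.
subst U'.
have -> : [forall U'', (t <= #|codeword_set bin alpha G U'' :&: nonerased Z|)%N ==> (U'' == U)].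
  apply/forallP => V; apply/implyP => gV; apply: contraT => /nV.
  by rewrite /good gV.
by [].
Qed.

Lemma decoder_bound G U Z :
  (((decoder bin alpha t G Z != Some U) : nat)%:R : R) <=
  ((~~ good t G U Z) : nat)%:R + \sum_V (((V != U) && good t G V Z) : nat)%:R.
Proof.
have sge0 : 0 <= \sum_V ((((V != U) && good t G V Z) : nat)%:R : R).
  by apply: sumr_ge0 => V _; apply: ler0n.
case: (boolP (good t G U Z)) => gU /=; last first.
  apply: (@le_trans _ _ 1); first by case: (_ != _).
  by rewrite lerDl.
rewrite add0r.
case: (boolP [exists V, (V != U) && good t G V Z]) => [/existsP[V HV]|/existsPn H].
  apply: (@le_trans _ _ 1); first by case: (_ != _).
  by rewrite (bigD1 V) //= HV /= lerDl; apply: sumr_ge0 => V' _; apply: ler0n.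
rewrite (@decoder_ok G U Z gU) ?eqxx //=; last first.
by move=> V VU; have := H V; rewrite negb_and VU.
Qed.

Lemma pc1 : pc <= 1.
Proof. move: psum pe0 ps0; lra. Qed.

Lemma partA G U (eps : R) : 0 < eps -> t%:R = n%:R * (pc - eps) ->
  \sum_(Y : {ffun 'I_n -> option T}) channel1_prob pc pe ps (codeword bin alpha G U) Y *
     ((~~ good t G U Y) : nat)%:R <= expR (- (2 * n%:R * eps ^+ 2)).
Proof.
move=> e0 tR.
set X := codeword bin alpha G U.
set lam := 4 * eps.
have l0 : 0 <= lam by rewrite /lam; lra.
pose g (j : 'I_n) (y : option T) := expR (- lam * ((y == Some (X j)) : nat)%:R).
have step1 : forall Y : {ffun 'I_n -> option T},
    (((~~ good t G U Y) : nat)%:R : R) <= expR (lam * t%:R) * \prod_j g j (Y j).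
  move=> Y.
  set J := [set j | Y j == Some (X j)].
  have cJ : #|J| = (\sum_j ((Y j == Some (X j)) : nat))%N.
    rewrite -sum1_card big_mkcond /=; apply: eq_bigr => j _; rewrite inE.
    by case: (_ == _).
  have JA : (#|J| <= #|codeword_set bin alpha G U :&: nonerased Y|)%N.
    rewrite -(card_imset J (@codeword_inj G U)); apply: subset_leq_card.
    apply/fintype.subsetP => y /imsetP[j]; rewrite inE => /eqP Yj ->.
    rewrite inE; apply/andP; split; first by apply: imset_f.
    by rewrite inE; apply/existsP; exists j; rewrite Yj.
  have -> : \prod_j g j (Y j) = expR (- lam * #|J|%:R).
    rewrite /g -expR_sum -mulr_sumr; congr expR; congr (_ * _).
    by rewrite cJ natr_sum.
  rewrite -expRD.
  case: (boolP (good t G U Y)) => gY /=; first by apply: ltW; apply: expR_gt0.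
  apply: (@le_trans _ _ 1); first by [].
  rewrite -[X in X <= _]expR0 ler_expR.
  have : (#|J| < t)%N by apply: leq_ltn_trans JA _; rewrite ltnNge.
  move/ltnW; rewrite -(ler_nat R) => H.
  rewrite mulNr -mulrBr; apply: mulr_ge0 => //; by rewrite subr_ge0.
apply: (@le_trans _ _ (\sum_(Y : {ffun 'I_n -> option T}) channel1_prob pc pe ps X Y *
     (expR (lam * t%:R) * \prod_j g j (Y j)))).
  apply: ler_sum => Y _; apply: ler_pM => //; exact: chan_ge0.
under eq_bigr do rewrite mulrCA.
rewrite -mulr_sumr chan_prod.
have row : forall j, \sum_y row_prob pc pe ps (X j) y * g j y = 1 - pc + pc * expR (- lam).
  move=> j; rewrite row_sum /g /= eqxx /= mulr0 expR0 mulr1 mulr1.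
  under eq_bigr => e ne do rewrite (inj_eq (@Some_inj _)) (negbTE ne) /= mulr0 expR0.
  rewrite rowc. move: psum. lra.
under eq_bigr do rewrite row.
rewrite prodr_const card_ord.
have pc01 : 0 <= pc <= 1 by apply/andP; split; [|exact: pc1].
have H1 : (1 - pc + pc * expR (- lam)) ^+ n <= expR (- (pc * lam) + lam ^+ 2 / 8) ^+ n.
  apply: lerXn2r; rewrite ?nnegrE; last exact: (@hoeff R pc lam pc01 l0).
    have := pc1; have : 0 <= pc * expR (- lam) by apply: mulr_ge0 => //; apply: ltW; apply: expR_gt0.
    lra.
  by apply: ltW; apply: expR_gt0.
apply: le_trans (ler_wpM2l (ltW (expR_gt0 _)) H1) _.
rewrite -expRM_natr -expRD tR /lam.
suff -> : 4 * eps * (n%:R * (pc - eps)) + (- (pc * (4 * eps)) + (4 * eps) ^+ 2 / 8) * n%:R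
   = - (2 * n%:R * eps ^+ 2) by [].
by field.
Qed.


Definition memo (A : {set T}) (y : option T) : bool :=
  if y is Some e then e \in A else false.

Lemma goodB G V (Y : {ffun 'I_n -> option T}) :
  (((good t G V Y) : nat)%:R : R) <=
  \sum_(S : {set 'I_n} | #|S| == t) \prod_(j in S) ((memo (codeword_set bin alpha G V) (Y j)) : nat)%:R.
Proof.
set A := codeword_set bin alpha G V.
have ge0 : 0 <= \sum_(S : {set 'I_n} | #|S| == t) \prod_(j in S) (((memo A (Y j)) : nat)%:R : R).
  by apply: sumr_ge0 => S _; apply: prodr_ge0 => j _; apply: ler0n.
case: (boolP (good t G V Y)) => gY //=.
set J := [set j | memo A (Y j)].
pose f (j : 'I_n) := odflt (nseq_tuple (w + m) false) (Y j).
have JA : (#|A :&: nonerased Y| <= #|J|)%N.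
  apply: (@leq_trans #|f @: J|); last exact: leq_imset_card.
  apply: subset_leq_card; apply/fintype.subsetP => y; rewrite !inE => /andP[yA /existsP[j /eqP Yj]].
  apply/imsetP; exists j; first by rewrite inE Yj.
  by rewrite /f Yj.
have : (t <= #|J|)%N by apply: leq_trans gY JA.
case/card_geqP => s [us ss Js].
rewrite (bigD1 [set x in s]) /=; last by rewrite cardsE (card_uniqP us) ss.
apply: (@le_trans _ _ 1); first by [].
rewrite -[X in X <= _]addr0; apply: lerD.
  rewrite big1 // => j; rewrite inE => /Js; rewrite inE => -> //.
by apply: sumr_ge0 => S _; apply: prodr_ge0 => j _; apply: ler0n.
Qed.

Definition phi (b : bool) : R := pc * (b : nat)%:R + ps / DL * (n%:R - (b : nat)%:R).

Lemma pm_row G U V j :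
  \sum_y row_prob pc pe ps (codeword bin alpha G U j) y *
     ((memo (codeword_set bin alpha G V) y) : nat)%:R
  = phi ((G^T *m U) j 0 == (G^T *m V) j 0).
Proof.
set A := codeword_set bin alpha G V; set x := codeword bin alpha G U j.
rewrite row_sum /= mulr0 add0r /phi -mem_codeword_set -/x -/A.
congr (_ + _); congr (_ * _).
have -> : \sum_(e : T | e != x) (((e \in A) : nat)%:R : R) = #|A :\ x|%:R.
  rewrite -natr_sum; congr (_%:R).
  rewrite -sum1_card big_mkcond [in RHS]big_mkcond /=; apply: eq_bigr => e _ /=.
  by rewrite !inE; case: (e == x); case: (e \in A).
have := cardsD1 x A; rewrite card_codeword_set => E.
by rewrite E natrD [_ + #|_|%:R]addrC addrK.
Qed.

Definition ev U V (c : 'cV[F]_k) := ((c^T *m U) 0 0 == (c^T *m V) 0 0).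

Lemma ev_col G U V j : ((G^T *m U) j 0 == (G^T *m V) j 0) = ev U V (col j G).
Proof.
have E : forall W : 'cV[F]_k, (G^T *m W) j 0 = ((col j G)^T *m W) 0 0.
  by move=> W; rewrite !mxE; apply: eq_bigr => i _; rewrite !mxE.
by rewrite /ev !E.
Qed.

Lemma partB_Y G U V :
  \sum_(Y : {ffun 'I_n -> option T}) channel1_prob pc pe ps (codeword bin alpha G U) Y *
     ((good t G V Y) : nat)%:R <=
  \sum_(S : {set 'I_n} | #|S| == t) \prod_j (if j \in S then phi (ev U V (col j G)) else 1).
Proof.
apply: (@le_trans _ _ (\sum_(Y : {ffun 'I_n -> option T}) channel1_prob pc pe ps (codeword bin alpha G U) Y *
   \sum_(S : {set 'I_n} | #|S| == t) \prod_(j in S) ((memo (codeword_set bin alpha G V) (Y j)) : nat)%:R)).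
  apply: ler_sum => Y _; apply: ler_wpM2l; [exact: chan_ge0|exact: goodB].
under eq_bigr do rewrite mulr_sumr.
rewrite exchange_big /=; apply: ler_sum => S _.
under eq_bigr do rewrite big_mkcond /=.
rewrite (chan_prod (codeword bin alpha G U)
  (fun j y => if j \in S then ((memo (codeword_set bin alpha G V) y) : nat)%:R else 1)).
rewrite le_eqVlt; apply/orP; left; apply/eqP.
apply: eq_bigr => j _; case: (j \in S).
  by rewrite pm_row ev_col.
by under eq_bigr do rewrite mulr1; rewrite row_total.
Qed.

Lemma sum_cols (h : 'I_n -> 'cV[F]_k -> R) :
  \sum_(G : 'M[F]_(k, n)) \prod_j h j (col j G) = \prod_j \sum_(c : 'cV[F]_k) h j c.
Proof.
rewrite bigA_distr_bigA /=.
rewrite (reindex (fun f : {ffun 'I_n -> 'cV[F]_k} => \matrix_(i, j) f j i 0)) /=.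
  apply: eq_bigr => f _; apply: eq_bigr => j _; congr h.
  by apply/matrixP => i i'; rewrite !mxE (ord1 i').
exists (fun G => [ffun j => col j G]).
  move=> f _; apply/ffunP => j; rewrite ffunE.
  by apply/matrixP => i i'; rewrite !mxE (ord1 i').
by move=> G _; apply/matrixP => i j; rewrite !mxE ffunE mxE.
Qed.

Lemma count_ev U V : V != U ->
  (\sum_(c : 'cV[F]_k) (((ev U V c) : nat)%:R : R)) * #|F|%:R = (#|F| ^ k)%:R.
Proof.
move=> VU.
have [i0 Hi0] : exists i0, U i0 0 != V i0 0.
  apply/existsP; apply: contraT; rewrite negb_exists => /forallP H.
  move: VU; rewrite eq_sym => /eqP []; apply/matrixP => i j.
  by rewrite (ord1 j); have := H i; rewrite negbK => /eqP.
pose d i := U i 0 - V i 0.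
pose L (c : 'cV[F]_k) := \sum_i c i 0 * d i.
have evL : forall c, ev U V c = (L c == 0).
  move=> c; rewrite /ev !mxE -subr_eq0 -sumrB /L; congr (_ == 0).
  by apply: eq_bigr => i _; rewrite !mxE mulrBr.
pose u : 'cV[F]_k := \col_i (if i == i0 then (d i0)^-1 else 0).
have Lu : forall c x, L (c + x *: u) = L c + x.
  move=> c x; rewrite /L.
  under eq_bigr do rewrite !mxE mulrDl.
  rewrite big_split /=; congr (_ + _).
  rewrite (bigD1 i0) //= eqxx big1 ?addr0; last first.
    by move=> i /negbTE ->; rewrite mulr0 mul0r.
  by rewrite divfK // /d subr_eq0.
have shift : forall x : F, \sum_(c : 'cV[F]_k) (((L c == x) : nat)%:R : R)
                         = \sum_(c : 'cV[F]_k) (((L c == 0) : nat)%:R : R).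
  move=> x; rewrite (reindex_inj (addIr (x *: u))) /=.
  apply: eq_bigr => c _; rewrite Lu.
  by rewrite -{2}[x]add0r (inj_eq (addIr x)).
under eq_bigr do rewrite evL.
have tot : \sum_(x : F) \sum_(c : 'cV[F]_k) (((L c == x) : nat)%:R : R) = (#|F| ^ k)%:R.
  rewrite exchange_big /=.
  rewrite (eq_bigr (fun _ => 1)); last first.
    move=> c _; rewrite (bigD1 (L c)) //= eqxx big1 ?addr0 //.
    by move=> x; rewrite eq_sym => /negbTE ->.
  by rewrite sumr_const card_mx muln1.
rewrite -tot; under [in RHS]eq_bigr do rewrite shift.
by rewrite sumr_const mulr_natr.
Qed.

Lemma DL_eq : DL = #|F|%:R * n%:R - 1.
Proof. by rewrite -natrX expnD -hF -hn natrM. Qed.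

Lemma q_gt0 : (0 < #|F|)%N.
Proof. by rewrite hF expn_gt0. Qed.

Lemma avgS U V (S : {set 'I_n}) : V != U ->
  (#|{: 'M[F]_(k, n)}|%:R)^-1 *
    \sum_(G : 'M[F]_(k, n)) \prod_j (if j \in S then phi (ev U V (col j G)) else 1)
  <= ((#|F|%:R)^-1) ^+ #|S|.
Proof.
move=> VU.
set q : R := #|F|%:R.
set Q : R := (#|F| ^ k)%:R.
have q0 : q != 0 by rewrite pnatr_eq0 -lt0n q_gt0.
have Q0 : Q != 0 by rewrite pnatr_eq0 -lt0n expn_gt0 q_gt0.
rewrite (sum_cols (fun j c => if j \in S then phi (ev U V c) else 1)) card_mx.
have -> : ((#|F| ^ (k * n))%:R : R)^-1 = \prod_(j < n) Q^-1.
  by rewrite prodr_const card_ord exprVn /Q -natrX -expnM.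
rewrite -big_split /= -prodr_const [in X in _ <= X]big_mkcond /=.
apply: ler_prod => j _; case: (j \in S) => /=; last first.
  rewrite sumr_const card_mx muln1 -/Q mulVf //.
  by rewrite lexx ler01.
set K := \sum_(c : 'cV[F]_k) (((ev U V c) : nat)%:R : R).
have KQ : K * q = Q by rewrite /K count_ev.
have Es : \sum_(c : 'cV[F]_k) phi (ev U V c) = pc * K + ps / DL * (n%:R * Q - K).
  rewrite /phi big_split /= -!mulr_sumr sumrB sumr_const card_mx muln1 -/Q mulr_natr.
  by [].
rewrite Es.
have DL0 : DL != 0 by apply: lt0r_neq0; apply: DL_gt0.
have -> : Q^-1 * (pc * K + ps / DL * (n%:R * Q - K)) = (pc + ps) / q.
  have EK : K = Q / q by rewrite -KQ mulfK.
  move: DL0; rewrite EK DL_eq => DL0.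
  by field; rewrite Q0 q0 DL0.
have qp : 0 < q by rewrite ltr0n q_gt0.
apply/andP; split.
  by apply: divr_ge0; [move: pc0 ps0; lra | apply: ltW].
rewrite ler_pdivrMr // mulVf // -subr_ge0.
move: psum pe0; lra.
Qed.

Lemma card_sets : #|{: {set 'I_n}}| = (2 ^ n)%N.
Proof.
have := card_powerset [set: 'I_n]; rewrite cardsT card_ord => <-.
by apply: eq_card => S; rewrite powersetE finset.subsetT.
Qed.

Lemma partB_V U V : V != U ->
  \sum_(G : 'M[F]_(k, n)) (#|{: 'M[F]_(k, n)}|%:R)^-1 *
    \sum_(Y : {ffun 'I_n -> option T}) channel1_prob pc pe ps (codeword bin alpha G U) Y *
      ((good t G V Y) : nat)%:R
  <= 2 ^+ n * ((#|F|%:R : R)^-1) ^+ t.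
Proof.
move=> VU.
have c0 : 0 <= ((#|{: 'M[F]_(k, n)}|%:R : R)^-1) by rewrite invr_ge0 ler0n.
apply: (@le_trans _ _ (\sum_(G : 'M[F]_(k, n)) (#|{: 'M[F]_(k, n)}|%:R)^-1 *
  \sum_(S : {set 'I_n} | #|S| == t) \prod_j (if j \in S then phi (ev U V (col j G)) else 1))).
  by apply: ler_sum => G _; apply: ler_wpM2l => //; apply: partB_Y.
under eq_bigr do rewrite mulr_sumr.
rewrite exchange_big /=.
apply: (@le_trans _ _ (\sum_(S : {set 'I_n} | #|S| == t) ((#|F|%:R : R)^-1) ^+ t)).
  apply: ler_sum => S /eqP St; rewrite -St -mulr_sumr; exact: avgS.
have qi0 : 0 <= ((#|F|%:R : R)^-1) ^+ t by apply: exprn_ge0; rewrite invr_ge0 ler0n.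
apply: (@le_trans _ _ (\sum_(S : {set 'I_n}) ((#|F|%:R : R)^-1) ^+ t)).
  rewrite [X in _ <= X](bigID (fun S : {set 'I_n} => #|S| == t)) /= lerDl.
  by apply: sumr_ge0.
by rewrite sumr_const card_sets -[X in X <= _]mulr_natl natrX.
Qed.

Lemma main_sec U (eps : R) :
  0 < eps -> k%:R = n%:R * (pc - 2 * eps) -> t%:R = n%:R * (pc - eps) ->
  error_prob pc pe ps t bin alpha U <=
    expR (- (2 * n%:R * eps ^+ 2)) + 2 `^ (n%:R - n%:R * eps * w%:R).
Proof.
move=> e0 kR tR.
set c : R := (#|{: 'M[F]_(k, n)}|%:R)^-1.
have c0 : 0 <= c by rewrite invr_ge0 ler0n.
have cM : c *+ #|{: 'M[F]_(k, n)}| = 1.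
  rewrite -mulr_natr mulVf // pnatr_eq0 -lt0n; apply/card_gt0P; by exists 0.
have step1 : error_prob pc pe ps t bin alpha U =
   \sum_(G : 'M[F]_(k, n)) c * \sum_(Y : {ffun 'I_n -> option T})
      channel1_prob pc pe ps (codeword bin alpha G U) Y *
      (((decoder bin alpha t G Y != Some U) : nat)%:R).
  rewrite /error_prob; apply: eq_bigr => G _; congr (_ * _); apply: eq_bigr => Y _.
  congr (_ * _).
  have hs : forall s : 'S_n, decoder bin alpha t G (permute_rows Y s) = decoder bin alpha t G Y.
    by move=> s; rewrite /decoder nonerased_perm.
  under eq_bigr do rewrite hs.
  rewrite sumr_const card_Sn -mulrnAl -mulr_natr mulVf ?mul1r //.
  by rewrite pnatr_eq0 -lt0n fact_gt0.
rewrite step1.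
pose fA G := \sum_(Y : {ffun 'I_n -> option T})
      channel1_prob pc pe ps (codeword bin alpha G U) Y * ((~~ good t G U Y) : nat)%:R.
pose fB V G := \sum_(Y : {ffun 'I_n -> option T})
      channel1_prob pc pe ps (codeword bin alpha G U) Y * (((V != U) && good t G V Y) : nat)%:R.
apply: (@le_trans _ _ (\sum_(G : 'M[F]_(k, n)) c * fA G + \sum_V \sum_(G : 'M[F]_(k, n)) c * fB V G)).
  rewrite [X in _ <= _ + X]exchange_big -big_split /=.
  apply: ler_sum => G _; rewrite -mulr_sumr -mulrDr; apply: ler_wpM2l => //.
  rewrite /fA /fB exchange_big -big_split /=.
  apply: ler_sum => Y _; rewrite -mulr_sumr -mulrDr; apply: ler_wpM2l; first exact: chan_ge0.
  exact: decoder_bound.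
apply: lerD.
  apply: (@le_trans _ _ (\sum_(G : 'M[F]_(k, n)) c * expR (- (2 * n%:R * eps ^+ 2)))).
    by apply: ler_sum => G _; apply: ler_wpM2l => //; apply: partA.
  by rewrite sumr_const -mulrnAl cM mul1r.
apply: (@le_trans _ _ (\sum_(V : 'cV[F]_k) 2 ^+ n * ((#|F|%:R : R)^-1) ^+ t)).
  apply: ler_sum => V _; case: (boolP (V != U)) => VU.
    rewrite /fB; under eq_bigr do under eq_bigr do rewrite VU /=.
    exact: partB_V.
  rewrite big1; last first.
    by move=> G _; rewrite /fB big1 ?mulr0 // => Y _; rewrite (negbTE VU) /= mulr0.
  by apply: mulr_ge0; [apply: exprn_ge0 | apply: exprn_ge0; rewrite invr_ge0 ler0n].
rewrite sumr_const card_mx muln1.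
have n0 : (0 < n)%N by rewrite hn expn_gt0.
have nR : 0 < (n%:R : R) by rewrite ltr0n.
have dR : t%:R - k%:R = n%:R * eps :> R by rewrite tR kR; ring.
have kt : (k <= t)%N.
  rewrite -(ler_nat R) -subr_ge0 dR; apply: mulr_ge0; lra.
set d := (t - k)%N.
have td : t = (k + d)%N by rewrite /d subnKC.
have dR' : (d%:R : R) = n%:R * eps by rewrite /d natrB // dR.
have -> : n%:R * eps * w%:R = ((w * d)%N)%:R :> R by rewrite natrM dR' mulrC.
rewrite powRB; last by apply/implyP => _; rewrite pnatr_eq0.
rewrite !powR_mulrn //.
rewrite -[_ *+ _]mulr_natr natrX hF natrX td exprD exprM.
set a : R := (2 : R) ^+ w.

have a0 : a != 0 by rewrite expf_neq0 // pnatr_eq0.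
rewrite !exprVn.
set A := a ^+ k; set B := a ^+ d; set N := (2 : R) ^+ n.
have A0 : A != 0 by rewrite expf_neq0.
have B0 : B != 0 by rewrite expf_neq0.
rewrite le_eqVlt; apply/orP; left; apply/eqP.
by field; rewrite A0 B0.
Qed.

End Main.


Theorem mainTheorem6 (R : realType) (F : finFieldType) (m w n k t : nat)
  (pc pe ps eps : R)
  (bin : F -> w.-tuple bool) (alpha : 'I_n -> m.-tuple bool) (U : 'cV[F]_k) :
  (0 < m)%N -> (0 < w)%N -> n = (2 ^ m)%N -> #|F| = (2 ^ w)%N ->
  bijective bin -> bijective alpha ->
  0 <= pc -> 0 <= pe -> 0 <= ps -> pc + pe + ps = 1 ->
  0 < eps -> 0 < pc - 2 * eps ->
  k%:R = n%:R * (pc - 2 * eps) -> t%:R = n%:R * (pc - eps) ->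
  error_prob pc pe ps t bin alpha U <=
    expR (- (2 * n%:R * eps ^+ 2)) + 2 `^ (n%:R - n%:R * eps * w%:R).
Proof.
move=> m0 w0 hn hF bb ba pc0 pe0 ps0 psum e0 _ kR tR.
exact: (@main_sec R F m w n k t pc pe ps bin alpha (bij_inj bb) (bij_inj ba) w0 pc0 pe0 ps0 psum hF hn U eps e0 kR tR).
Qed.
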